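(* Let $q\ge2$. For every small $\epsilon\in(0,1)$ and every $0\le\kappa<\frac{q-1}{q}$, with probability at least $1-q^{-n}$, a random code $\mathcal{C}\subseteq\Sigma_q^n$ of rate $R=1-H_q(\kappa)-\epsilon$ is list decodable against any $\kappa$ fraction of deletions (i.e., $\kappa n$ deletions) with list size $O(1/\epsilon)$, for all sufficiently large $n$.
   Context: $\Sigma_q$ is a finite alphabet of size $q$. A code $\mathcal{C}\subseteq\Sigma_q^n$ is list decodable against $\kappa n$ deletions with list size $L$ if for every word $\mathbf r$ there are at most $L$ codewords $\mathbf c\in\mathcal{C}$ such that $\mathbf r$ can be obtained from $\mathbf c$ by at most $\kappa n$ single-symbol deletions. The rate is $\log_q|\mathcal{C}|/n$; a random code of rate $R$ is a uniformly random subset of $\Sigma_q^n$ of size $q^{Rn}$. $H_q(x)=x\log_q(q-1)-x\log_qx-(1-x)\log_q(1-x)$ for $0<x<1$, $H_q(0)=H_q(1)=0$. *)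

(* Defs.v *)
From mathcomp Require Import all_boot.
From Stdlib Require Import Reals ClassicalEpsilon.

Local Open Scope R_scope.

Definition pbool (P : Prop) : bool :=
  if excluded_middle_informative P then true else false.

Definition logq (q : nat) (x : R) : R := (ln x / ln (INR q))%R.

(* q-ary entropy: H_q(x) for 0<x<1, and H_q(0)=H_q(1)=0 (value outside [0,1] irrelevant). *)
Definition Hq (q : nat) (x : R) : R :=
  if Rle_dec x 0 then 0%R
  else if Rle_dec 1 x then 0%R
  else (x * logq q (INR q - 1) - x * logq q x - (1 - x) * logq q (1 - x))%R.

Definition word (q n : nat) := (n.-tuple 'I_q).

Definition obtainable_by_deletions (q n : nat) (kappa : R) (c : word q n) (r : seq 'I_q) : Prop :=
  subseq r (tval c) /\ (INR (n - size r) <= kappa * INR n)%R.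

Definition list_decodable_deletions (q n : nat) (kappa : R) (L : R) (C : {set word q n}) : Prop :=
  forall r : seq 'I_q,
    (INR #|[set c in C | pbool (obtainable_by_deletions q n kappa c r)]| <= L)%R.

(* Size of a code of rate Rt: floor(q^(Rt n)). *)
Definition code_size (q n : nat) (Rt : R) : nat :=
  Z.to_nat (Int_part (Rpower (INR q) (Rt * INR n))).

(* Probability that a uniformly random subset of Sigma_q^n of size M satisfies P. *)
Definition prob_random_code (q n M : nat) (P : {set word q n} -> Prop) : R :=
  (INR #|[set C : {set word q n} | (#|C| == M) && pbool (P C)]|
   / INR #|[set C : {set word q n} | #|C| == M]|)%R.

(* Main.v *)
Require Import Defs.
From Stdlib Require Import Reals Lra Lia ClassicalEpsilon ZArith Classical.
From mathcomp Require Import all_boot zify.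

Lemma card_cons (q n : nat) (P : seq 'I_q -> bool) :
  #|[set c : n.+1.-tuple 'I_q | P c]| = \sum_(a : 'I_q) #|[set w : n.-tuple 'I_q | P (a :: w)]|.
Proof.
rewrite -sum1dep_card.
have hb : bijective (fun p : 'I_q * n.-tuple 'I_q => [tuple of p.1 :: p.2]).
  exists (fun c : n.+1.-tuple 'I_q => (thead c, [tuple of behead c])).
    by case=> a w /=; congr pair; apply: val_inj.
  by move=> c; case/tupleP: c => a w; apply: val_inj.
rewrite (reindex _ (onW_bij _ hb)) /=.
rewrite big_mkcond /=.
rewrite -(pair_big xpredT xpredT (fun a (w : n.-tuple 'I_q) => if P (a :: val w) then 1 else 0)) /=.
apply: eq_bigr => a _.
by rewrite -sum1dep_card big_mkcond [RHS]big_mkcond.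
Qed.

Definition cnt (q n : nat) (r : seq 'I_q) := #|[set c : n.-tuple 'I_q | subseq r c]|.

Lemma cnt_nil q n : cnt q n [::] = (q ^ n)%N.
Proof.
rewrite /cnt (_ : [set c | _] = [set: n.-tuple 'I_q]); last by apply/setP => c; rewrite !inE sub0seq.
by rewrite cardsT card_tuple card_ord.
Qed.

Lemma cnt_big q n r : (n < size r)%N -> cnt q n r = 0%N.
Proof.
move=> h; apply: eq_card0 => c; rewrite inE; apply/negP => /size_subseq.
by rewrite size_tuple leqNgt h.
Qed.

Lemma cnt_cons q n b r : cnt q n.+1 (b :: r) = (cnt q n r + (q - 1) * cnt q n (b :: r))%N.
Proof.
rewrite /cnt card_cons (bigD1 b) //= eqxx; congr addn.
rewrite (eq_bigr (fun _ => #|[set w : n.-tuple 'I_q | subseq (b :: r) w]|)); last first.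
  by move=> a /negbTE ab; apply: eq_card => w; rewrite !inE /= eq_sym ab.
by rewrite sum_nat_const cardC1 card_ord subn1 mulnC.
Qed.

Lemma union_bound (T I : finType) (P : pred T) (R : pred I) (Q : I -> pred T) :
  (forall x, P x -> exists2 i, R i & Q i x) ->
  (#|[set x | P x]| <= \sum_(i | R i) #|[set x | Q i x]|)%N.
Proof.
move=> h.
rewrite -sum1dep_card.
rewrite (eq_bigr (fun i => \sum_(x | Q i x) 1)); last by move=> i _; rewrite sum1dep_card.
rewrite (exchange_big_dep xpredT) //=.
apply: (@leq_trans (\sum_(x | P x) \sum_(i | R i && Q i x) 1)).
  apply: leq_sum => x Px; have [i Ri Qi] := h x Px.
  by rewrite (bigD1 i) //= ?Ri ?Qi.
rewrite [X in (_ <= X)%N](bigID P) /=.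
apply: leq_trans (leq_addr _ _).
by apply: leq_sum => x _.
Qed.

Lemma sub_k (T : finType) (B : {set T}) k : (k <= #|B|)%N ->
  exists A : {set T}, (A \subset B) /\ #|A| = k.
Proof.
move=> /card_geqP [s [us ss sub]].
exists [set x in s]; split.
  by apply/subsetP => x; rewrite inE; apply: sub.
by rewrite cardsE (card_uniqP us).
Qed.
Lemma supsets_card (T : finType) (A : {set T}) M : (#|A| <= M)%N -> (M <= #|T|)%N ->
  #|[set C : {set T} | (#|C| == M) && (A \subset C)]| = 'C(#|T| - #|A|, M - #|A|).
Proof.
move=> hAM hMT.
rewrite -sum1dep_card (reindex_inj (@setC_inj T)) /=.
rewrite (eq_bigl (fun D : {set T} => (D \subset ~: A) && (#|D| == #|T| - M))); last first.
  move=> D; rewrite subsetC andbC; congr andb.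
  have := cardsC D; move=> e.
  apply/eqP/eqP; lia.
rewrite sum1dep_card cards_draws.
have := cardsC A => e.
have -> : #|~: A| = (#|T| - #|A|)%N by lia.
rewrite -bin_sub; last by lia.
congr binomial; lia.
Qed.
Local Open Scope R_scope.

Lemma INR_expn q n : INR (expn q n) = INR q ^ n.
Proof. elim: n => [|n IH]; first by rewrite expn0. by rewrite expnS mult_INR IH. Qed.

Lemma cnt_bound (q : nat) (x : R) : 0 < x -> x <= 1 -> (1 <= q)%N ->
  forall n r, (size r <= n)%N ->
  INR (cnt q n r) <= (/ x) ^ (n - size r) * (1 + (INR q - 1) * x) ^ n.
Proof.
move=> x0 x1 q1.
have q1' : 1 <= INR q by apply: (le_INR 1); apply/leP.
have yx : INR q <= / x * (1 + (INR q - 1) * x).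
  have e : / x * (1 + (INR q - 1) * x) = / x + (INR q - 1) by field; lra.
  rewrite e.
  have : 1 <= / x by rewrite -Rinv_1; apply: Rinv_le_contravar.
  lra.
have y1 : 1 <= 1 + (INR q - 1) * x by nra.
elim=> [|n IH] r.
  case: r => [|//] _; rewrite cnt_nil /=; lra.
case: r => [|b r] hr.
  rewrite cnt_nil subn0 -Rpow_mult_distr INR_expn.
  apply: pow_incr; split => //; apply: pos_INR.
rewrite cnt_cons plus_INR mult_INR minus_INR; last by apply/leP.
have hr' : (size r <= n)%N by [].
rewrite /= subSS.
have h1 := IH r hr'.
case: (ltnP (size r) n) => hlt.
  have h2 := IH (b :: r) hlt.
  have en : (n - size r = (n - (size r).+1).+1)%N by rewrite subnSK.
  rewrite en in h1 *; rewrite /= in h2.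
  set d := (n - (size r).+1)%N in h1 h2 *.
  set y := (1 + (INR q - 1) * x) in h1 h2 *.
  have e : (/ x) ^ d.+1 * y ^ n.+1 = (/ x) ^ d.+1 * y ^ n
     + (INR q - 1) * ((/ x) ^ d * y ^ n).
    rewrite /= /y; field; lra.
  rewrite e; apply: Rplus_le_compat => //.
  apply: Rmult_le_compat_l; lra.
have en : (size r = n) by apply/eqP; rewrite eqn_leq hr' hlt.
rewrite (cnt_big q n (b :: r)) /=; last by rewrite en.
rewrite en subnn /= in h1 *.
have : 0 <= (1 + (INR q - 1) * x) ^ n by apply: pow_le; lra.
nra.
Qed.

Lemma div_ge0 a b : 0 <= a -> 0 < b -> 0 <= a / b.
Proof. move=> ha hb; apply: Rmult_le_pos => //; apply: Rlt_le; apply: Rinv_0_lt_compat; exact hb. Qed.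

Lemma bin_ratio (N M : nat) : (M <= N)%N -> (0 < N)%N -> forall k, (k <= M)%N ->
  INR 'C(N - k, M - k) <= INR 'C(N, M) * (INR M / INR N) ^ k.
Proof.
move=> hMN hN; elim=> [|k IH] hk.
  rewrite !subn0 /=; lra.
have hk' : (k <= M)%N by apply: ltnW.
have IH' := IH hk'.
have e := mul_bin_diag (N - k) (M - k.+1).
have e1 : (N - k).-1 = (N - k.+1)%N by lia.
have e2 : (M - k.+1).+1 = (M - k)%N by lia.
rewrite e1 e2 in e.
have e' := f_equal INR e; rewrite !mult_INR in e'.
have hNk : 0 < INR (N - k) by apply: lt_0_INR; apply/ltP; lia.
have hN' : 0 < INR N by apply: lt_0_INR; apply/ltP.
have eC : INR 'C(N - k.+1, M - k.+1) = INR (M - k) / INR (N - k) * INR 'C(N - k, M - k).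
  field_simplify_eq; [lra | lra].
rewrite eC /=.
have r1 : INR (M - k) / INR (N - k) <= INR M / INR N.
  rewrite !minus_INR; try (apply/leP; lia).
  have hk2 : INR k <= INR M by apply: le_INR; apply/leP.
  have hk3 : INR M <= INR N by apply: le_INR; apply/leP.
  have hk4 : INR k < INR N by apply: lt_INR; apply/ltP; lia.
  have ee : INR M / INR N - (INR M - INR k) / (INR N - INR k)
     = INR k * (INR N - INR M) / (INR N * (INR N - INR k)) by field; lra.
  have : 0 <= INR k * (INR N - INR M) / (INR N * (INR N - INR k)).
    apply: div_ge0; last by apply: Rmult_lt_0_compat; lra.
    apply: Rmult_le_pos; [apply: pos_INR | lra].
  lra.
have p0 : 0 <= INR (M - k) / INR (N - k).
  apply: div_ge0; [apply: pos_INR | lra].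
have p1 : 0 <= INR 'C(N - k, M - k) by apply: pos_INR.
have p2 : 0 <= INR M / INR N by apply: div_ge0; [apply: pos_INR | lra].
apply: Rle_trans (Rmult_le_compat _ _ _ _ p0 p1 r1 IH') _.
lra.
Qed.

Lemma bad_S (T : finType) (S : {set T}) k M : (M <= #|T|)%N -> (0 < #|T|)%N ->
  INR #|[set C : {set T} | (#|C| == M) && (k <= #|C :&: S|)%N]|
  <= INR 'C(#|S|, k) * (INR 'C(#|T|, M) * (INR M / INR #|T|) ^ k).
Proof.
move=> hMT hT.
set c := if (k <= M)%N then 'C(#|T| - k, M - k) else 0%N.
have hu := @union_bound _ _ (fun C : {set T} => (#|C| == M) && (k <= #|C :&: S|)%N)
   (fun A : {set T} => (A \subset S) && (#|A| == k))
   (fun A C => (#|C| == M) && (A \subset C)).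
have hu' : (#|[set C : {set T} | (#|C| == M) && (k <= #|C :&: S|)%N]| <= 'C(#|S|, k) * c)%N.
  apply: leq_trans (hu _) _.
    move=> C /andP [hC hk].
    have [A [hA1 hA2]] := sub_k _ _ _ hk.
    exists A.
      by rewrite hA2 eqxx andbT; apply: subset_trans hA1 (subsetIr _ _).
    by rewrite hC; apply: subset_trans hA1 (subsetIl _ _).
  rewrite (eq_bigr (fun _ => c)).
    by rewrite sum_nat_const -cards_draws cardsE mulnC.
  move=> A /andP [_ /eqP hA].
  rewrite /c; case: ifP => hkM.
    by subst k; rewrite supsets_card.
  apply: eq_card0 => C; rewrite inE; apply/negP => /andP [/eqP hC hAC].
  have := subset_leq_card hAC; rewrite hA hC hkM //.
apply: Rle_trans (le_INR _ _ (elimT leP hu')) _.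
rewrite mult_INR; apply: Rmult_le_compat_l; first by apply: pos_INR.
rewrite /c; case: ifP => hkM.
  by apply: bin_ratio => //.
rewrite /=; apply: Rmult_le_pos; first by apply: pos_INR.
apply: pow_le; apply: div_ge0; [apply: pos_INR|apply: lt_0_INR; apply/ltP; exact: hT].
Qed.

Lemma Hq_expand q k : 0 < k < 1 -> 1 < INR q ->
  Hq q k * ln (INR q) = k * ln (INR q - 1) - k * ln k - (1 - k) * ln (1 - k).
Proof.
move=> [k0 k1] q1.
have lq : 0 < ln (INR q) by rewrite -ln_1; apply ln_increasing; lra.
rewrite /Hq; destruct (Rle_dec k 0); first lra.
destruct (Rle_dec 1 k); first lra.
cbn iota beta delta [is_left]; rewrite /logq; field; lra.
Qed.

Lemma Hq_ge0 q k : 0 <= k -> k < 1 -> 1 < INR q -> 2 <= INR q -> 0 <= Hq q k.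
Proof.
move=> k0 k1 q1 q2.
rewrite /Hq; destruct (Rle_dec k 0) as [|kp]; first by cbn iota beta delta [is_left]; lra.
destruct (Rle_dec 1 k); first by cbn iota beta delta [is_left]; lra.
have kp' : 0 < k by lra.
have lq : 0 < ln (INR q) by rewrite -ln_1; apply ln_increasing; lra.
have l1 : 0 <= ln (INR q - 1).
  rewrite -ln_1; destruct (Req_dec (INR q - 1) 1) as [e|e]; first by rewrite e; lra.
  apply: Rlt_le; apply ln_increasing; lra.
have l2 : ln k < 0 by rewrite -ln_1; apply ln_increasing; lra.
have l3 : ln (1 - k) < 0 by rewrite -ln_1; apply ln_increasing; lra.
rewrite /logq.
have e : k * (ln (INR q - 1) / ln (INR q)) - k * (ln k / ln (INR q)) -
    (1 - k) * (ln (1 - k) / ln (INR q)) =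
    (k * ln (INR q - 1) - k * ln k - (1 - k) * ln (1 - k)) / ln (INR q) by field; lra.
rewrite e; apply: Rmult_le_pos; last by apply: Rlt_le; apply: Rinv_0_lt_compat.
nra.
Qed.

Lemma ent_identity q k n : 0 < k -> k < (INR q - 1) / INR q -> 2 <= INR q ->
  let x := k / ((INR q - 1) * (1 - k)) in
  Rpower (/ x) (k * INR n) * Rpower (1 + (INR q - 1) * x) (INR n)
  = Rpower (INR q) (Hq q k * INR n).
Proof.
move=> k0 kq q2 x.
have k1 : k < 1.
  have : (INR q - 1) / INR q = 1 - / INR q by field; lra.
  have : 0 < / INR q by apply: Rinv_0_lt_compat; lra.
  lra.
have hx : 0 < x by rewrite /x; apply: Rdiv_lt_0_compat => //; apply: Rmult_lt_0_compat; lra.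
have ey : 1 + (INR q - 1) * x = / (1 - k) by rewrite /x; field; lra.
rewrite ey /Rpower -exp_plus; congr exp.
rewrite ln_Rinv // ln_Rinv; last lra.
rewrite /x /Rdiv ln_mult //; last by apply: Rinv_0_lt_compat; apply: Rmult_lt_0_compat; lra.
rewrite ln_Rinv; last by apply: Rmult_lt_0_compat; lra.
rewrite ln_mult; try lra.
have := Hq_expand q k (conj k0 k1) ltac:(lra).
move=> e; have -> : Hq q k * INR n * ln (INR q) = INR n * (Hq q k * ln (INR q)) by ring.
rewrite e; ring.
Qed.

Lemma ent_bound q k n r : (2 <= q)%N -> 0 <= k -> k < (INR q - 1) / INR q ->
  (size r <= n)%N -> INR (n - size r) <= k * INR n ->
  INR (cnt q n r) <= Rpower (INR q) (Hq q k * INR n).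
Proof.
move=> q2 k0 kq hr hd.
have q2' : 2 <= INR q by apply: (le_INR 2); apply/leP.
destruct (Req_dec k 0) as [ek|nk].
  subst k.
  have hd0 : (n - size r = 0)%N.
    have := pos_INR (n - size r); move=> h.
    apply: INR_eq; rewrite /=; lra.
  have esz : size r = n by lia.
  have -> : Hq q 0 = 0 by rewrite /Hq; destruct (Rle_dec 0 0); [done | lra].
  rewrite Rmult_0_l Rpower_O; last lra.
  apply: (le_INR _ 1); apply/leP.
  apply/card_le1_eqP => c1 c2; rewrite !inE => h1 h2.
  apply: val_inj => /=.
  have e1 := size_subseq_leqif h1; have e2 := size_subseq_leqif h2.
  move: e1 e2 => [_ e1] [_ e2].
  rewrite size_tuple esz eqxx in e1; rewrite size_tuple esz eqxx in e2.
  by move/eqP: (esym e1) => <-; move/eqP: (esym e2) => <-.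
have kp : 0 < k by lra.
have k1 : k < 1.
  have : (INR q - 1) / INR q = 1 - / INR q by field; lra.
  have : 0 < / INR q by apply: Rinv_0_lt_compat; lra.
  lra.
set x := k / ((INR q - 1) * (1 - k)).
have D0 : 0 < (INR q - 1) * (1 - k) by apply: Rmult_lt_0_compat; lra.
have hx : 0 < x by rewrite /x; apply: Rdiv_lt_0_compat.
have kle : k <= (INR q - 1) * (1 - k).
  have : k * INR q < INR q - 1.
    have e : k * INR q < (INR q - 1) / INR q * INR q by apply: Rmult_lt_compat_r; lra.
    have e2 : (INR q - 1) / INR q * INR q = INR q - 1 by field; lra.
    lra.
  nra.
have hx1 : x <= 1.
  have e : 1 - x = ((INR q - 1) * (1 - k) - k) / ((INR q - 1) * (1 - k)) by rewrite /x; field; lra.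
  have : 0 <= 1 - x by rewrite e; apply: div_ge0; lra.
  lra.
have hc := cnt_bound q x hx hx1 (ltnW q2) n r hr.
apply: Rle_trans hc _.
rewrite -(ent_identity q k n kp kq q2') -/x.
have ix : 1 <= / x by rewrite -Rinv_1; apply: Rinv_le_contravar.
have y0 : 0 < 1 + (INR q - 1) * x by nra.
rewrite -(Rpower_pow _ (/ x)); last lra.
rewrite -(Rpower_pow n); last lra.
apply: Rmult_le_compat_r; first by apply: Rlt_le; apply: exp_pos.
by apply: Rle_Rpower.
Qed.
Lemma sum_le_seq (I : eqType) (s : seq I) (P : pred I) (f : I -> nat) X : 0 <= X ->
  (forall i, P i -> INR (f i) <= X) -> INR (\sum_(i <- s | P i) f i) <= INR (size s) * X.
Proof.
move=> X0 h; elim: s => [|a s IH]; first by rewrite big_nil /=; lra.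
rewrite big_cons (_ : size (a :: s) = (size s).+1) // S_INR; case: ifP => Pa.
  rewrite plus_INR; have := h a Pa; lra.
lra.
Qed.

Lemma sum_le (I : finType) (P : pred I) (f : I -> nat) X : 0 <= X ->
  (forall i, P i -> INR (f i) <= X) -> INR (\sum_(i | P i) f i) <= INR #|I| * X.
Proof.
move=> X0 h; have := @sum_le_seq I (index_enum I) P f X X0 h.
by rewrite cardT enumT.
Qed.

Lemma bin_le_pow a k : ('C(a, k) <= a ^ k)%N.
Proof.
apply: (@leq_trans (a ^_ k)).
  rewrite -bin_ffact; apply: leq_pmulr; exact: fact_gt0.
elim: k => [|k IH]; first by rewrite ffactn0.
rewrite ffactnSr expnSr; apply: leq_mul => //; exact: leq_subr.
Qed.

Lemma pboolP (P : Prop) : pbool P -> P.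
Proof. by rewrite /pbool; case: excluded_middle_informative. Qed.

Lemma pboolT (P : Prop) : P -> pbool P.
Proof. by rewrite /pbool; case: excluded_middle_informative. Qed.

Lemma code_size_le q n Rt : 1 < INR q -> INR (code_size q n Rt) <= Rpower (INR q) (Rt * INR n).
Proof.
move=> q1; rewrite /code_size.
have hp : 0 < Rpower (INR q) (Rt * INR n) by apply: exp_pos.
have [b1 b2] := base_Int_part (Rpower (INR q) (Rt * INR n)).
set z := Int_part _ in b1 b2 *.
destruct (Z.le_gt_cases 0 z) as [hz|hz].
  by rewrite INR_IZR_INZ Z2Nat.id.
by case: z hz b1 b2 => //= p _ _ _; lra.
Qed.
Lemma exp_le a b : a <= b -> exp a <= exp b.
Proof. move=> h; destruct (Rle_lt_or_eq_dec _ _ h) as [h'|h']; [apply: Rlt_le; apply: exp_increasing => // | rewrite h'; lra]. Qed.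

Lemma exp_pow a k : exp a ^ k = exp (INR k * a).
Proof. by rewrite -Rpower_pow ?/Rpower ?ln_exp //; apply: exp_pos. Qed.

Lemma final_ineq (n kk : nat) (lq eps H Rt Mr : R) :
 0 < lq -> 0 < eps -> 3 < eps * INR kk -> Rt = 1 - H - eps -> 0 <= Mr ->
 Mr <= exp (Rt * INR n * lq) -> INR n + 1 <= exp (INR n * lq) ->
 (INR n + 1) * exp (INR n * lq) * (exp (H * INR n * lq) * (Mr / exp (INR n * lq))) ^ kk
   <= exp (- INR n * lq).
Proof.
move=> lq0 e0 ek eR M0 hM hn.
have n0 : 0 <= INR n by apply: pos_INR.
have z : exp (H * INR n * lq) * (Mr / exp (INR n * lq)) <= exp (- eps * INR n * lq).
  have e : exp (- eps * INR n * lq) = exp (H * INR n * lq) * (exp (Rt * INR n * lq) / exp (INR n * lq)).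
    rewrite /Rdiv -exp_Ropp -!exp_plus; congr exp; rewrite eR; ring.
  rewrite e; apply: Rmult_le_compat_l; first by apply: Rlt_le; apply: exp_pos.
  apply: Rmult_le_compat_r => //; apply: Rlt_le; apply: Rinv_0_lt_compat; apply: exp_pos.
have z0 : 0 <= exp (H * INR n * lq) * (Mr / exp (INR n * lq)).
  apply: Rmult_le_pos; first by apply: Rlt_le; apply: exp_pos.
  apply: Rmult_le_pos => //; apply: Rlt_le; apply: Rinv_0_lt_compat; apply: exp_pos.
have z2 := pow_incr _ _ kk (conj z0 z).
rewrite exp_pow in z2.
have z3 : exp (INR kk * (- eps * INR n * lq)) <= exp (-3 * INR n * lq).
  apply: exp_le.
  have : 0 <= INR n * lq by apply: Rmult_le_pos; lra.
  nra.
have p0 : 0 <= (INR n + 1) * exp (INR n * lq) by apply: Rmult_le_pos; [lra | apply: Rlt_le; apply: exp_pos].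
apply: Rle_trans (Rmult_le_compat_l _ _ _ p0 (Rle_trans _ _ _ z2 z3)) _.
have e : (INR n + 1) * exp (INR n * lq) * exp (-3 * INR n * lq) = (INR n + 1) * exp (- INR n * lq) * / exp (INR n * lq).
  rewrite !Rmult_assoc; congr (_ * _); rewrite -exp_Ropp -!exp_plus; congr exp; ring.
rewrite e.
have ep := exp_pos (INR n * lq).
have ep2 := exp_pos (- INR n * lq).
apply/Rle_trans; first apply: Rmult_le_compat_r; first by apply: Rlt_le; apply: Rinv_0_lt_compat.
  apply: Rmult_le_compat_r; [apply: Rlt_le; exact ep2 | exact hn].
rewrite (Rmult_comm (exp (INR n * lq))) Rmult_assoc Rinv_r; lra.
Qed.

From Stdlib Require Import Reals.
Theorem mainTheorem7 :
  forall q : nat, leq 2 q ->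
  exists Cst : R, (0 < Cst)%R /\
  exists eps0 : R, (0 < eps0)%R /\
  forall eps kappa : R,
    (0 < eps)%R -> (eps < 1)%R -> (eps < eps0)%R ->
    (0 <= kappa)%R -> (kappa < (INR q - 1) / INR q)%R ->
    exists N : nat, forall n : nat, leq N n ->
      (prob_random_code q n (code_size q n (1 - Hq q kappa - eps)%R)
         (list_decodable_deletions q n kappa (Cst / eps)%R)
       >= 1 - Rpower (INR q) (- INR n))%R.
Proof.
move=> q q2.
exists 3; split; first lra.
exists 1; split; first lra.
move=> eps kappa e0 e1 _ k0 kq.
exists 0%N => n _.
have q2' : 2 <= INR q by apply: (le_INR 2); apply/leP.
have q1 : 1 < INR q by lra.
have ka1 : kappa < 1.
  have : (INR q - 1) / INR q = 1 - / INR q by field; lra.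
  have : 0 < / INR q by apply: Rinv_0_lt_compat; lra.
  lra.
have H0 := Hq_ge0 q kappa k0 ka1 q1 q2'.
set Rt := 1 - Hq q kappa - eps.
set M := code_size q n Rt.
set L := 3 / eps.
have L0 : 0 < L by apply: Rdiv_lt_0_compat; lra.
set B := Rpower (INR q) (Hq q kappa * INR n).
have [kk [hk1 hk2]] : exists kk : nat, L < INR kk /\ INR kk <= L + 1.
  exists (Z.to_nat (up L)); have [a1 a2] := archimed L.
  have hz : (0 <= up L)%Z by apply: le_IZR; lra.
  rewrite INR_IZR_INZ Z2Nat.id //; lra.
have hNN : #|{: word q n}| = expn q n by rewrite card_tuple card_ord.
have lq : 0 < ln (INR q) by rewrite -ln_1; apply ln_increasing; lra.
have NNe : INR (expn q n) = exp (INR n * ln (INR q)).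
  by rewrite INR_expn -Rpower_pow; [rewrite /Rpower | lra].
have hM := code_size_le q n Rt q1.
have hMN : leq M #|{: word q n}|.
  apply/leP; apply: INR_le; rewrite hNN NNe.
  apply: Rle_trans hM _; rewrite /Rpower; apply: exp_le.
  have : 0 <= INR n * ln (INR q) by apply: Rmult_le_pos; [apply: pos_INR | lra].
  have : Rt <= 1 by rewrite /Rt; lra.
  move=> h1 h2; have := Rmult_le_compat_r _ _ _ h2 h1; lra.
have hN0 : leq 1 #|{: word q n}| by rewrite hNN expn_gt0; lia.
set LD := list_decodable_deletions q n kappa L.
set S := fun t : seq 'I_q => [set c : word q n | subseq t c].
set X := B ^ kk * (INR 'C(#|{: word q n}|, M) * (INR M / INR #|{: word q n}|) ^ kk).
have B0 : 0 < B by apply: exp_pos.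
have X0 : 0 <= X.
  apply: Rmult_le_pos; first by apply: pow_le; lra.
  apply: Rmult_le_pos; first by apply: pos_INR.
  apply: pow_le; apply: div_ge0; [apply: pos_INR | apply: lt_0_INR; apply/ltP; exact: hN0].
set cond := fun m : 'I_n.+1 => pbool (INR (n - m) <= kappa * INR n).
set Q := fun (m : 'I_n.+1) (C : {set word q n}) => (#|C| == M) &&
   [exists t : m.-tuple 'I_q, leq kk #|C :&: S t|].
have hex : forall C : {set word q n}, (#|C| == M) && ~~ pbool (LD C) -> exists2 m, cond m & Q m C.
  move=> C /andP [hC hnLD].
  have nLD : ~ LD C by move=> h; move: hnLD; rewrite pboolT.
  have [r hr] : exists r, ~ (INR #|[set c in C | pbool (obtainable_by_deletions q n kappa c r)]| <= L).
    by apply: not_all_ex_not.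
  have hr' := Rnot_le_lt _ _ hr.
  set cnt0 := #|[set c in C | pbool (obtainable_by_deletions q n kappa c r)]| in hr'.
  have cpos : leq 1 cnt0 by apply/leP; apply: INR_lt; rewrite /=; lra.
  move: (cpos); rewrite card_gt0 => /set0Pn [c].
  rewrite inE => /andP [cC /pboolP [hsub hdel]].
  have hsz : leq (size r) n by have := size_subseq hsub; rewrite size_tuple.
  have hsz' : leq (size r).+1 n.+1 by [].
  exists (Ordinal hsz').
    by rewrite /cond /=; apply: pboolT.
  rewrite /Q hC /=; apply/existsP; exists (in_tuple r).
  have hkc : leq kk cnt0.
    have : (kk < cnt0.+1)%coq_nat by apply: INR_lt; rewrite S_INR; lra.
    by move/ltP.
  apply: leq_trans hkc (subset_leq_card _).
  apply/subsetP => x; rewrite !inE => /andP [xC /pboolP [hs _]]; by rewrite xC hs.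
have hBad : INR #|[set C : {set word q n} | (#|C| == M) && ~~ pbool (LD C)]|
    <= INR n.+1 * (INR (expn q n) * X).
  apply: Rle_trans (le_INR _ _ (elimT leP (union_bound _ _ _ cond Q hex))) _.
  apply: Rle_trans (sum_le _ cond _ (INR (expn q n) * X) _ _) _.
  - by apply: Rmult_le_pos => //; apply: pos_INR.
  - move=> m cm.
    have hex2 : forall C : {set word q n}, Q m C -> exists2 t : m.-tuple 'I_q, xpredT t &
       (#|C| == M) && leq kk #|C :&: S t|.
      move=> C /andP [hC /existsP [t ht]]; exists t => //; by rewrite hC.
    apply: Rle_trans (le_INR _ _ (elimT leP (union_bound _ _ _ xpredT _ hex2))) _.
    apply: Rle_trans (sum_le _ xpredT _ X X0 _) _.
      move=> t _.
      apply: Rle_trans (bad_S _ (S t) kk M hMN hN0) _.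
      rewrite /X; apply: Rmult_le_compat_r.
        apply: Rmult_le_pos; first by apply: pos_INR.
        apply: pow_le; apply: div_ge0; [apply: pos_INR | apply: lt_0_INR; apply/ltP; exact: hN0].
      apply: Rle_trans (le_INR _ _ (elimT leP (bin_le_pow _ kk))) _.
      rewrite INR_expn; apply: pow_incr; split; first by apply: pos_INR.
      apply: (ent_bound q kappa n t q2 k0 kq).
        by rewrite size_tuple -ltnS; exact: ltn_ord m.
      by rewrite size_tuple; apply: pboolP.
    apply: Rmult_le_compat_r => //.
    rewrite card_tuple card_ord; apply: le_INR; apply/leP.
    apply: leq_pexp2l; [lia | rewrite -ltnS; exact: ltn_ord m].
  by rewrite card_ord; apply: Rle_refl.
rewrite /prob_random_code.
have hsplit : (#|[set C : {set word q n} | (#|C| == M) && pbool (LD C)]|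
   + #|[set C : {set word q n} | (#|C| == M) && ~~ pbool (LD C)]|
   = #|[set C : {set word q n} | #|C| == M]|)%nat.
  rewrite -(cardsID [set C : {set word q n} | pbool (LD C)] [set C : {set word q n} | #|C| == M]).
  congr addn; apply: eq_card => C; rewrite !inE; [reflexivity | apply: andbC].
have hAll : #|[set C : {set word q n} | #|C| == M]| = 'C(#|{: word q n}|, M) by rewrite card_draws.
set G := #|[set C : {set word q n} | (#|C| == M) && pbool (LD C)]| in hsplit *.
set Bd := #|[set C : {set word q n} | (#|C| == M) && ~~ pbool (LD C)]| in hsplit hBad *.
set A := #|[set C : {set word q n} | #|C| == M]| in hsplit hAll *.
have A0 : 0 < INR A.
  apply: lt_0_INR; apply/ltP; rewrite hAll bin_gt0; exact: hMN.
have eG : INR G = INR A - INR Bd by rewrite -hsplit plus_INR; ring.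
have hn1 : INR n + 1 <= exp (INR n * ln (INR q)).
  rewrite -NNe -S_INR; apply: le_INR; apply/leP; apply: ltn_expl; lia.
have hk3 : 3 < eps * INR kk.
  have e3 : eps * L = 3 by rewrite /L; field; lra.
  have := Rmult_lt_compat_l _ _ _ e0 hk1; lra.
have fi := final_ineq n kk (ln (INR q)) eps (Hq q kappa) Rt (INR M) lq e0 hk3 erefl (pos_INR M) hM hn1.
have key : INR Bd <= exp (- INR n * ln (INR q)) * INR A.
  apply: Rle_trans hBad _.
  rewrite /X hAll (_ : INR #|{: word q n}| = exp (INR n * ln (INR q))); last by rewrite hNN NNe.
  rewrite NNe S_INR -hAll.
  have e : (INR n + 1) * (exp (INR n * ln (INR q)) * (B ^ kk * (INR A * (INR M / exp (INR n * ln (INR q))) ^ kk)))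
     = ((INR n + 1) * exp (INR n * ln (INR q)) * (B * (INR M / exp (INR n * ln (INR q)))) ^ kk) * INR A.
    rewrite Rpow_mult_distr; ring.
  rewrite e; apply: Rmult_le_compat_r; first lra.
  exact: fi.
rewrite eG /Rpower; apply: Rle_ge.
have e : (INR A - INR Bd) / INR A = 1 - INR Bd / INR A by field; lra.
rewrite e.
have : INR Bd / INR A <= exp (- INR n * ln (INR q)).
  have e2 : exp (- INR n * ln (INR q)) = exp (- INR n * ln (INR q)) * INR A / INR A by field; lra.
  rewrite e2; apply: Rmult_le_compat_r => //; apply: Rlt_le; apply: Rinv_0_lt_compat => //.
lra.
Qed.
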